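(* Let $a\in(0,1)$, $p\in(0,1)$, and let $X=(X_t)_{t=0,\dots,n}$ be a stationary Markov chain generated by the copula $C(u,v)=a\min(u,v)+(1-a)\max(u+v-1,0)$ and Bernoulli($p$) marginal distribution, and let $\bar p=\frac{1}{n+1}\sum_{t=0}^nX_t$. Then as $n\to\infty$, $$(n+1)\operatorname{Var}(\bar p)\to \frac{p(1-p)(a+1-2p)}{1-a}\ \text{ if } p<1/2,\qquad (n+1)\operatorname{Var}(\bar p)\to \frac{p(1-p)(2p-1+a)}{1-a}\ \text{ if } p\ge1/2;$$ in particular, for $p\neq1/2$ the asymptotic variance of $\bar p$ equals the asymptotic variance of the maximum likelihood estimator $\hat p$ of $p$, namely the $(p,p)$ entry of the asymptotic covariance matrix of $\sqrt{n+1}((\hat a,\hat p)-(a,p))$.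
   Context: A stationary Markov chain $(X_t)$ is generated by a copula $C$ and a marginal cdf $F$ if each $X_t$ has cdf $F$ and $P(X_t\le x,X_{t+1}\le y)=C(F(x),F(y))$ for all $x,y$; Bernoulli($p$) means $P(X_t=1)=p$. For $p\neq1/2$ the maximum likelihood estimator $(\hat a,\hat p)$ of $(a,p)$ (a consistent root of the likelihood equations based on the transition probabilities of the chain) satisfies $\sqrt{n+1}((\hat a,\hat p)-(a,p))\to N_2(0,\Sigma^{-1})$, where the $(p,p)$ entry of $\Sigma^{-1}$ is $\frac{p(1-p)(a+1-2p)}{1-a}$ for $p<1/2$ and $\frac{p(1-p)(2p-1+a)}{1-a}$ for $p>1/2$. *)

(* Defs.v *)
From HB Require Import structures.
From mathcomp Require Import all_boot all_order all_algebra.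
From mathcomp Require Import all_classical all_reals topology normedtype sequences.
Set Implicit Arguments. Unset Strict Implicit. Unset Printing Implicit Defensive.
Import Order.TTheory GRing.Theory Num.Theory.
Local Open Scope ring_scope.

Section Defs.
Variable R : realType.

Definition copulaC (a u v : R) : R :=
  a * Num.min u v + (1 - a) * Num.max (u + v - 1) 0.

Definition bernoulli_cdf (p x : R) : R :=
  if x < 0 then 0 else if x < 1 then 1 - p else 1.

Definition Omega (n : nat) := {ffun 'I_n.+1 -> bool}.

Definition Xv (n : nat) (t : 'I_n.+1) (w : Omega n) : R :=
  (nat_of_bool (w t))%:R.

Definition prob (n : nat) (mu : Omega n -> R) (A : pred (Omega n)) : R :=
  \sum_(w | A w) mu w.

Definition is_pmf (n : nat) (mu : Omega n -> R) : Prop :=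
  (forall w, 0 <= mu w) /\ \sum_w mu w = 1.

Definition is_markov (n : nat) (mu : Omega n -> R) : Prop :=
  forall (t : 'I_n) (x : Omega n),
    let t0 : 'I_n.+1 := inord t in
    let t1 : 'I_n.+1 := inord t.+1 in
    prob mu [pred w : Omega n | [forall s : 'I_n.+1, (s <= t.+1)%N ==> (w s == x s)]]
      * prob mu [pred w : Omega n | w t0 == x t0]
    = prob mu [pred w : Omega n | [forall s : 'I_n.+1, (s <= t)%N ==> (w s == x s)]]
      * prob mu [pred w : Omega n | (w t0 == x t0) && (w t1 == x t1)].

Definition copula_markov_chain (n : nat) (mu : Omega n -> R)
    (C : R -> R -> R) (F : R -> R) : Prop :=
  [/\ is_pmf mu, is_markov mu,
      (forall (t : 'I_n.+1) (x : R), prob mu [pred w : Omega n | Xv t w <= x] = F x) &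
      (forall (t : 'I_n) (x y : R),
         prob mu [pred w : Omega n | (Xv (inord t) w <= x) && (Xv (inord t.+1) w <= y)]
         = C (F x) (F y))].

Definition pbar (n : nat) (w : Omega n) : R :=
  (n.+1%:R)^-1 * \sum_(t < n.+1) Xv t w.

Definition expect (n : nat) (mu : Omega n -> R) (f : Omega n -> R) : R :=
  \sum_w mu w * f w.

Definition var_pbar (n : nat) (mu : Omega n -> R) : R :=
  expect mu (fun w => (pbar w - expect mu (@pbar n)) ^+ 2).

End Defs.

(* Main.v *)
Require Import Defs.
From HB Require Import structures.
From mathcomp Require Import all_boot all_order all_algebra.
From mathcomp Require Import all_classical all_reals topology normedtype sequences.
From mathcomp Require Import ring lra.
Import Order.TTheory GRing.Theory Num.Theory numFieldNormedType.Exports.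
Local Open Scope classical_set_scope.
Local Open Scope ring_scope.

Definition d (s t : nat) := if (s <= t)%N then (t - s)%N else (s - t)%N.

Section Chain.
Variables (R : realType) (n : nat) (mu : Omega n -> R).

Definition ind (b : bool) : R := (nat_of_bool b)%:R.
Definition E (f : Omega n -> R) := \sum_w mu w * f w.

Lemma E_ext f g : (forall w, f w = g w) -> E f = E g.
Proof. by move=> h; apply: eq_bigr => w _; rewrite h. Qed.
Lemma ED f g : E (fun w => f w + g w) = E f + E g.
Proof. by rewrite /E -big_split; apply: eq_bigr => w _; rewrite mulrDr. Qed.
Lemma EZ c f : E (fun w => c * f w) = c * E f.
Proof. by rewrite /E mulr_sumr; apply: eq_bigr => w _; rewrite mulrCA. Qed.
Lemma EN f : E (fun w => - f w) = - E f.
Proof. by rewrite -mulN1r -EZ; apply: E_ext => w; rewrite mulN1r. Qed.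
Lemma EB f g : E (fun w => f w - g w) = E f - E g.
Proof. by rewrite ED EN. Qed.
Lemma E_sum (I : finType) (f : I -> Omega n -> R) :
  E (fun w => \sum_i f i w) = \sum_i E (f i).
Proof.
rewrite /E; under eq_bigr => w _ do rewrite mulr_sumr.
by rewrite exchange_big.
Qed.
Lemma probE A : prob mu A = E (fun w => ind (A w)).
Proof.
rewrite /prob /E big_mkcond /=; apply: eq_bigr => w _.
by rewrite /ind; case: (A w); rewrite ?mulr1 ?mulr0.
Qed.
Lemma prob_ext {A B : pred (Omega n)} : A =1 B -> prob mu A = prob mu B.
Proof. by move=> h; apply: eq_bigl. Qed.

Hypothesis mu1 : \sum_w mu w = 1.
Lemma Ec c : E (fun _ => c) = c.
Proof. by rewrite /E -big_distrl /= mu1 mul1r. Qed.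

Definition pref (t : nat) (x : Omega n) : pred (Omega n) :=
  [pred w : Omega n | [forall s : 'I_n.+1, (s <= t)%N ==> (w s == x s)]].
Definition trunc (t : nat) (w : Omega n) : Omega n :=
  [ffun s : 'I_n.+1 => if (s <= t)%N then w s else false].

Lemma trunc_pref t x w : x = trunc t x -> (trunc t w == x) = pref t x w.
Proof.
move=> hx; apply/eqP/forallP => [<- s|H].
  by apply/implyP => hs; rewrite ffunE hs.
rewrite hx; apply/ffunP => s; rewrite !ffunE; case: ifP => // hs.
by move: (H s); rewrite hs => /eqP.
Qed.

Lemma trunc_idem t w : trunc t (trunc t w) = trunc t w.
Proof. apply/ffunP => s; rewrite !ffunE; by case: ((s : nat) <= t)%N. Qed.

Lemma E_part t F : E F = \sum_x (if x == trunc t x then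
   \sum_(w | pref t x w) mu w * F w else 0).
Proof.
rewrite /E (partition_big (trunc t) predT) //=.
apply: eq_bigr => x _; case: ifP => [/eqP hx| hx].
  by apply: eq_bigl => w; rewrite trunc_pref.
rewrite big_pred0 // => w; apply/negP => /eqP hw.
by move: hx; rewrite -hw trunc_idem eqxx.
Qed.

Hypothesis hM : is_markov mu.

Definition meas (h : Omega n -> R) (t : nat) :=
  forall w w' : Omega n, (forall s : 'I_n.+1, (s <= t)%N -> w s = w' s) -> h w = h w'.

Lemma markovE (t : 'I_n) (h : Omega n -> R) (y z : bool) : meas h t ->
  E (fun w => h w * ind (w (inord t) == y) * ind (w (inord t.+1) == z))
    * prob mu [pred w : Omega n | w (inord t) == y]
  = E (fun w => h w * ind (w (inord t) == y))
    * prob mu [pred w : Omega n | (w (inord t) == y) && (w (inord t.+1) == z)].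
Proof.
move=> hh.
set t0 : 'I_n.+1 := inord t; set t1 : 'I_n.+1 := inord t.+1.
have vt0 : (t0 : nat) = t by rewrite /t0 inordK // ltnS ltnW.
have vt1 : (t1 : nat) = t.+1 by rewrite /t1 inordK // ltnS ltn_ord.
rewrite !(E_part t) !big_distrl; apply: eq_bigr => x _ /=.
case: ifP => [/eqP hx|]; last by rewrite !mul0r.
pose x' : Omega n := [ffun s => if s == t1 then z else x s].
have H : prob mu (pref t.+1 x') * prob mu [pred w : Omega n | w t0 == x' t0]
  = prob mu (pref t x') * prob mu [pred w : Omega n | (w t0 == x' t0) && (w t1 == x' t1)]
  := hM t x'.
have hx0 : x' t0 = x t0.
  by rewrite ffunE ifN //; apply/eqP => /(congr1 (@nat_of_ord _)); rewrite vt0 vt1 => /n_Sn.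
have hx1 : x' t1 = z by rewrite ffunE eqxx.
rewrite hx0 hx1 in H.
have hp0 : pref t x' =1 pref t x.
  move=> w; apply: eq_forallb => s; rewrite ffunE.
  case: (eqVneq s t1) => [->|//]; by rewrite vt1 ltnn.
have hp1 : pref t.+1 x' =1 [pred w : Omega n | pref t x w && (w t1 == z)].
  move=> w /=; apply/forallP/andP => [H1|[/forallP H1 H2] s].
    split; last by move: (H1 t1); rewrite vt1 leqnn hx1.
    apply/forallP => s; apply/implyP => hs; move: (H1 s); rewrite (leqW hs) /=.
    by rewrite ffunE ifN //; apply/eqP => e; move: hs; rewrite e vt1 ltnn.
  apply/implyP => hs; rewrite ffunE; case: (eqVneq s t1) => [->//|ne].
  have hs' : (s <= t)%N.
    by rewrite leq_eqVlt in hs; case/orP: hs => // /eqP e; case/eqP: ne; apply: val_inj; rewrite /= e vt1.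
  by move: (H1 s); rewrite hs'.
have inner : forall (g : Omega n -> R) (P : pred (Omega n)),
    \sum_(w | pref t x w) mu w * (h w * ind (w t0 == y) * g w)
    = h x * ind (x t0 == y) * \sum_(w | pref t x w) mu w * g w.
  move=> g P; rewrite mulr_sumr; apply: eq_bigr => w /forallP hw.
  have hw' : forall s : 'I_n.+1, (s <= t)%N -> w s = x s.
    by move=> s hs; move: (hw s); rewrite hs => /eqP.
  rewrite (hh w x hw') hw' ?vt0 //; by rewrite mulrCA.
have inner2 : \sum_(w | pref t x w) mu w * (h w * ind (w t0 == y))
    = h x * ind (x t0 == y) * prob mu (pref t x).
  have := inner (fun _ => 1) predT.
  under eq_bigr do rewrite mulr1.
  under [in X in _ = X -> _]eq_bigr do rewrite mulr1.
  by [].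
rewrite inner2 inner //.
have -> : \sum_(w | pref t x w) mu w * ind (w t1 == z) = prob mu (pref t.+1 x').
  rewrite (prob_ext hp1) /prob big_mkcondr /=; apply: eq_bigr => w _.
  by rewrite /ind; case: (w t1 == z); rewrite ?mulr1 ?mulr0.
rewrite (prob_ext hp0) in H.
case E0: (x t0 == y); last by rewrite /ind /= mulr0 !mul0r.
move/eqP: E0 => e.
rewrite e in H; by rewrite -!mulrA H.
Qed.

Variables (p q : R).
Hypothesis (hp0 : 0 < p) (hp1 : p < 1).
Hypothesis hP1 : forall t : 'I_n.+1, E (fun w => ind (w t)) = p.
Hypothesis hP11 : forall t : 'I_n,
  E (fun w => ind (w (inord t)) * ind (w (inord t.+1))) = q.

Definition rho := (q - p ^+ 2) / (p * (1 - p)).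
Definition X (s : nat) (w : Omega n) := ind (w (inord s)).

Lemma step (s : nat) (t : 'I_n) : (s <= t)%N ->
  E (fun w => X s w * X t.+1 w) - p ^+ 2
  = rho * (E (fun w => X s w * X t w) - p ^+ 2).
Proof.
move=> hs.
have hsn : (s < n.+1)%N by rewrite ltnS; exact: ltnW (leq_ltn_trans hs (ltn_ord t)).
have hh : meas (X s) t.
  by move=> w w' H; rewrite /X H // inordK.
have A1 := markovE t (X s) true true hh.
have A0 := markovE t (X s) false true hh.
set t0 : 'I_n.+1 := inord t in A1 A0.
set t1 : 'I_n.+1 := inord t.+1 in A1 A0.
have pr1 : prob mu [pred w : Omega n | w t0 == true] = p.
  by rewrite probE -(hP1 t0); apply: E_ext => w /=; case: (w t0).
have pr0 : prob mu [pred w : Omega n | w t0 == false] = 1 - p.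
  rewrite probE -(hP1 t0) -(Ec 1) -EB; apply: E_ext => w /=.
  by rewrite /ind; case: (w t0); rewrite /= ?subrr ?subr0.
have pr11 : prob mu [pred w : Omega n | (w t0 == true) && (w t1 == true)] = q.
  rewrite probE -(hP11 t); apply: E_ext => w /=.
  by rewrite /ind; case: (w t0); case: (w t1); rewrite /= ?mulr1 ?mulr0.
have pr01 : prob mu [pred w : Omega n | (w t0 == false) && (w t1 == true)] = p - q.
  rewrite probE -(hP11 t) -(hP1 t1) -EB; apply: E_ext => w /=.
  by rewrite /ind; case: (w t0); case: (w t1); rewrite /= ?mulr1 ?mulr0 ?subrr ?subr0.
rewrite pr1 in A1; rewrite pr11 in A1; rewrite pr0 in A0; rewrite pr01 in A0.
set u := E (fun w => X s w * X t w).
set a1 := E _ in A1; set a0 := E _ in A0.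
have u1 : E (fun w => X s w * X t.+1 w) = a1 + a0.
  rewrite /a1 /a0 -ED; apply: E_ext => w; rewrite /X -/t1.
  by rewrite /ind; case: (w t0); case: (w t1); rewrite /= ?mulr1 ?mulr0 ?addr0 ?add0r.
have e1 : E (fun w => X s w * ind (w t0 == true)) = u.
  by apply: E_ext => w; rewrite /X -/t0; case: (w t0).
have e0 : E (fun w => X s w * ind (w t0 == false)) = p - u.
  rewrite -(hP1 (inord s)) -EB; apply: E_ext => w; rewrite /X -/t0.
  by rewrite /ind; case: (w t0); rewrite /= ?mulr1 ?mulr0 ?subrr ?subr0.
rewrite e1 in A1; rewrite e0 in A0.
have hpn : p != 0 by rewrite gt_eqF.
have hqn : 1 - p != 0 by rewrite subr_eq0 eq_sym lt_eqF.
have ea1 : a1 = u * q / p by rewrite -A1 mulfK.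
have ea0 : a0 = (p - u) * (p - q) / (1 - p) by rewrite -A0 mulfK.
rewrite u1 ea1 ea0 /rho; field.
by rewrite hqn hpn.
Qed.

Lemma cov k s : (s + k <= n)%N ->
  E (fun w => X s w * X (s + k) w) = p ^+ 2 + p * (1 - p) * rho ^+ k.
Proof.
elim: k => [|k IH] hk.
  rewrite addn0 expr0 mulr1 -(hP1 (inord s)).
  rewrite (E_ext _ (fun w => ind (w (inord s)))); last first.
    by move=> w; rewrite /X /ind; case: (w _); rewrite /= ?mulr1 ?mulr0.
  rewrite hP1; ring.
have hk' : (s + k < n)%N by rewrite -addnS.
have := step s (Ordinal hk') (leq_addr k s); rewrite /= -addnS => H.
rewrite -(subrK (p ^+ 2) (E _)) H IH ?(ltnW hk') // [rho ^+ k.+1]exprS; ring.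
Qed.

Lemma covO (s t : 'I_n.+1) :
  E (fun w => ind (w s) * ind (w t)) = p ^+ 2 + p * (1 - p) * rho ^+ (d s t).
Proof.
rewrite /d; case: leqP => hst.
  have H := cov (t - s) s; rewrite subnKC // in H; rewrite -H; last by rewrite -ltnS.
  by apply: E_ext => w; rewrite /X !inord_val.
have H := cov (s - t) t; rewrite subnKC ?(ltnW hst) // in H; rewrite -H; last by rewrite -ltnS.
by apply: E_ext => w; rewrite /X !inord_val mulrC.
Qed.

Lemma var_formula : var_pbar mu =
  (n.+1%:R)^-2 * (p * (1 - p)) * \sum_(s < n.+1) \sum_(t < n.+1) rho ^+ (d s t).
Proof.
set N : R := n.+1%:R.
have hN : N != 0 by rewrite pnatr_eq0.
have hX : forall t : 'I_n.+1, E (Xv R t) = p := hP1.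
have hm : expect mu (@pbar R n) = p.
  change (E (@pbar R n) = p).
  rewrite /pbar EZ E_sum; under eq_bigr do rewrite hX.
by rewrite sumr_const card_ord -[p *+ _]mulr_natl mulKf.
rewrite /var_pbar hm.
change (E (fun w => (pbar R w - p) ^+ 2) = N^-2 * (p * (1 - p)) * \sum_(s < n.+1) \sum_(t < n.+1) rho ^+ (d s t)).
rewrite (E_ext _ (fun w => N^-2 * \sum_(s < n.+1) \sum_(t < n.+1) (Xv R s w - p) * (Xv R t w - p))); last first.
  move=> w; rewrite /pbar.
  have -> : N^-1 * \sum_(t < n.+1) Xv R t w - p = N^-1 * \sum_(t < n.+1) (Xv R t w - p).
    by rewrite sumrB sumr_const card_ord -[p *+ _]mulr_natl mulrBr mulKf.
  rewrite exprMn exprVn; congr (_ * _); rewrite expr2 mulr_suml.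
  by apply: eq_bigr => s _; rewrite mulr_sumr.
rewrite EZ E_sum -mulrA; congr (_ * _); rewrite mulr_sumr; apply: eq_bigr => s _.
rewrite E_sum mulr_sumr; apply: eq_bigr => t _.
rewrite (E_ext _ (fun w => ind (w s) * ind (w t) + ((-p) * ind (w t) + ((-p) * ind (w s) + p ^+ 2)))); last first.
  by move=> w; rewrite /Xv /ind; ring.
rewrite !ED !EZ Ec covO !hP1; ring.
Qed.

End Chain.

Lemma geomS (R : realType) (r : R) N :
  (1 - r) * \sum_(0 <= s < N) r ^+ (N - s) = r * (1 - r ^+ N).
Proof.
elim: N => [|N IH]; first by rewrite big_geq // mulr0 expr0 subrr mulr0.
rewrite big_nat_recr //= subSnn.
rewrite (eq_big_nat _ _ (F2 := fun s => r * r ^+ (N - s))); last first.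
  by move=> s /andP[_ hs]; rewrite subSn ?exprS // ltnW.
rewrite -mulr_sumr mulrDr mulrCA IH [r ^+ N.+1]exprS; ring.
Qed.

Lemma dsumS (R : realType) (r : R) N :
  (1 - r) ^+ 2 * \sum_(0 <= s < N) \sum_(0 <= t < N) r ^+ (d s t)
  = N%:R * (1 + r) * (1 - r) - 2 * r * (1 - r ^+ N).
Proof.
elim: N => [|N IH]; first by rewrite big_geq // mulr0 expr0 subrr; ring.
rewrite big_nat_recr //=.
rewrite (eq_big_nat _ _ (F2 := fun s => \sum_(0 <= t < N) r ^+ (d s t) + r ^+ (N - s))); last first.
  by move=> s /andP[_ hs]; rewrite big_nat_recr //= /d (ltnW hs).
rewrite big_split /= big_nat_recr //= {3}/d leqnn subnn expr0.
rewrite (eq_big_nat _ _ (F1 := fun t => r ^+ (d N t)) (F2 := fun t => r ^+ (N - t))); last first.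
  by move=> t /andP[_ ht]; rewrite /d leqNgt ht.
set S := \sum_(0 <= s < N) _.
set G := \sum_(0 <= s < N) _.
have -> : (1 - r) ^+ 2 * (S + G + (G + 1)) = (1 - r) ^+ 2 * S + 2 * ((1 - r) * ((1 - r) * G)) + (1 - r) ^+ 2 by ring.
rewrite IH geomS -natr1 [r ^+ N.+1]exprS; ring.
Qed.

Lemma lim_aux (R : realType) (L K r : R) : `|r| < 1 ->
  (fun n : nat => L - K * ((1 - r ^+ n.+1) / n.+1%:R)) @ \oo --> (L : R^o).
Proof.
move=> hr.
have h1 : (fun n : nat => (1 - r ^+ n.+1) / n.+1%:R) @ \oo --> (0 : R^o).
  have H : ((fun n : nat => 1 - r * r ^+ n) \* (@harmonic R)) @ \oo --> ((1 - r * 0) * 0 : R^o).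
    apply: cvgM; last exact: cvg_harmonic.
    apply: cvgB; first exact: cvg_cst.
    apply: cvgM; first exact: cvg_cst.
    exact: cvg_expr.
  rewrite mulr0 in H.
  apply: cvg_trans H; apply: near_eq_cvg; near=> k.
  by rewrite /= exprS.
have H : ((fun=> L) - ((fun=> K) \* (fun n : nat => (1 - r ^+ n.+1) / n.+1%:R))) @ \oo --> (L - K * 0 : R^o).
  apply: cvgB; first exact: cvg_cst.
  apply: cvgM => //; exact: cvg_cst.
rewrite mulr0 subr0 in H.
exact: H.
Unshelve. all: end_near.
Qed.

Definition qv (R : realType) (a p : R) := 2 * p - 1 + copulaC a (1 - p) (1 - p).

Lemma Xv_le0 (R : realType) n (t : 'I_n.+1) (w : Omega n) :
  (Xv R t w <= 0) = ~~ w t.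
Proof. by rewrite /Xv; case: (w t) => /=; rewrite ?ler10 ?lexx. Qed.

Lemma chain_formula (R : realType) (a p : R) (hp : 0 < p < 1) n (mu : Omega n -> R)
  (hmu : copula_markov_chain mu (copulaC a) (bernoulli_cdf p))
  (hr : rho R p (qv R a p) != 1) :
  let r := rho R p (qv R a p) in
  n.+1%:R * var_pbar mu = p * (1 - p) * (1 + r) / (1 - r)
     - 2 * p * (1 - p) * r / (1 - r) ^+ 2 * ((1 - r ^+ n.+1) / n.+1%:R).
Proof.
move=> r; case/andP: hp => hp0 hp1.
case: hmu => [[hpos mu1] hM hmarg hjoint].
have hb0 : bernoulli_cdf p 0 = 1 - p by rewrite /bernoulli_cdf ltxx ltr01.
have hN0 : forall t : 'I_n.+1, E _ _ mu (fun w => ind R (~~ w t)) = 1 - p.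
  move=> t; rewrite -hb0 -(hmarg t 0) probE; apply: E_ext => w /=.
  by rewrite Xv_le0.
have hP1 : forall t : 'I_n.+1, E _ _ mu (fun w => ind R (w t)) = p.
  move=> t; transitivity (E _ _ mu (fun=> 1) - E _ _ mu (fun w => ind R (~~ w t))); last first.
    by rewrite (Ec _ _ _ mu1) hN0; ring.
  rewrite -EB.
  by apply: E_ext => w; rewrite /ind; case: (w t); rewrite /= ?subrr ?subr0.
have hP11 : forall t : 'I_n,
    E _ _ mu (fun w => ind R (w (inord t)) * ind R (w (inord t.+1))) = qv R a p.
  move=> t; have := hjoint t 0 0; rewrite hb0 probE /qv => <-.
  transitivity (E _ _ mu (fun=> 1) - E _ _ mu (fun w => ind R (~~ w (inord t)))
     - E _ _ mu (fun w => ind R (~~ w (inord t.+1)))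
     + E _ _ mu (fun w => ind R ((Xv R (inord t) w <= 0) && (Xv R (inord t.+1) w <= 0)))); last first.
    by rewrite (Ec _ _ _ mu1) !hN0; ring.
  rewrite -!EB -ED.
  apply: E_ext => w /=; rewrite !Xv_le0 /ind.
  by case: (w (inord t)); case: (w (inord t.+1)); rewrite /= ?mulr1 ?mulr0 ?subrr ?subr0 ?addr0 ?add0r; ring.
rewrite (@var_formula R n mu mu1 hM p (qv R a p) hp0 hp1 hP1 hP11) -/r.
have hS := dsumS _ r n.+1.
have eS : \sum_(s < n.+1) \sum_(t < n.+1) r ^+ (d s t)
    = \sum_(0 <= s < n.+1) \sum_(0 <= t < n.+1) r ^+ (d s t).
  by rewrite big_mkord; apply: eq_bigr => s _; rewrite big_mkord.
have h1r : 1 - r != 0 by rewrite subr_eq0 eq_sym.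
have eS2 : \sum_(0 <= s < n.+1) \sum_(0 <= t < n.+1) r ^+ (d s t)
    = (n.+1%:R * (1 + r) * (1 - r) - 2 * r * (1 - r ^+ n.+1)) / (1 - r) ^+ 2.
  by rewrite -hS mulrAC divff ?mul1r // expf_neq0.
rewrite eS eS2.
have hN : n.+1%:R != 0 :> R by rewrite pnatr_eq0.
field.
by rewrite h1r addrC natr1 hN.
Qed.

Theorem proposition4 (R : realType) (a p : R)
  (ha : 0 < a < 1) (hp : 0 < p < 1)
  (mu : forall n : nat, Omega n -> R)
  (hmu : forall n : nat,
     copula_markov_chain (mu n) (copulaC a) (bernoulli_cdf p)) :
  (p < 2^-1 ->
     (fun n : nat => n.+1%:R * var_pbar (mu n)) @ \oo -->
       (p * (1 - p) * (a + 1 - 2 * p) / (1 - a) : R^o)) /\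
  (2^-1 <= p ->
     (fun n : nat => n.+1%:R * var_pbar (mu n)) @ \oo -->
       (p * (1 - p) * (2 * p - 1 + a) / (1 - a) : R^o)).
Proof.
have hp' := hp; case/andP: ha => ha0 ha1; case/andP: hp => hp0 hp1.
set q := qv R a p; set r := rho R p q.
have main : forall T : R, `|r| < 1 -> p * (1 - p) * (1 + r) / (1 - r) = T ->
    (fun n : nat => n.+1%:R * var_pbar (mu n)) @ \oo --> (T : R^o).
  move=> T hr1 <-.
  have hr : r != 1 by apply/eqP => e; move: hr1; rewrite e normr1 ltxx.
  have -> : (fun n : nat => n.+1%:R * var_pbar (mu n)) = (fun n : nat =>
     p * (1 - p) * (1 + r) / (1 - r)
     - 2 * p * (1 - p) * r / (1 - r) ^+ 2 * ((1 - r ^+ n.+1) / n.+1%:R)).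
    apply/funext => n; have := @chain_formula R a p hp' n (mu n) (hmu n) hr; rewrite /= -/q -/r => ->.
    by [].
  exact: lim_aux.
have hc : 0 < p * (1 - p) by rewrite mulr_gt0 // subr_gt0.
have hpn : p != 0 by rewrite gt_eqF.
have h1p : 1 - p != 0 by rewrite subr_eq0 eq_sym lt_eqF.
have h1a : 1 - a != 0 by rewrite subr_eq0 eq_sym lt_eqF.
split => hcase.
  have h2 : 2 * p < 1 by lra.
  have hq : q = a * p.
    rewrite /q /qv /copulaC minxx max_l; last lra.
    ring.
  apply: main.
    rewrite /r /rho hq ltr_norml; apply/andP; split.
      rewrite ltr_pdivlMr //; nra.
    rewrite ltr_pdivrMr //; nra.
  rewrite /r /rho hq; field.
  have -> : p * (1 - p) - (a * p - p ^+ 2) = p * (1 - a) by ring.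
  by rewrite h1a h1p hpn mulf_neq0.
have h2 : 1 <= 2 * p by lra.
have hq : q = 2 * p - 1 + a * (1 - p).
  rewrite /q /qv /copulaC minxx max_r; last lra.
  ring.
apply: main.
  rewrite /r /rho hq ltr_norml; apply/andP; split.
    rewrite ltr_pdivlMr //; nra.
  rewrite ltr_pdivrMr //; nra.
rewrite /r /rho hq; field.
have -> : p * (1 - p) - (2 * p - 1 + a * (1 - p) - p ^+ 2) = (1 - p) * (1 - a) by ring.
by rewrite h1a h1p hpn mulf_neq0.
Qed.
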